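(* Let $G=(\{f_i\},\{c_i\},\{X_i\},W)$ be a networked public goods game (as in the context). Suppose there exist a symmetric matrix $W^0=(w^0_{ij})$ and constants $L_i\ge 0$, $C_i>0$ such that (1) $W^0$ is positive definite with minimal eigenvalue $\sigma_0>0$, and $w^0_{ii}=1$ for all $i$; (2) $c_i'$ is $L_i$-Lipschitz for every $i$; (3) $f_i$ is $C_i$-concave for every $i$; (4) $\sigma_0>\sigma_{\max}(\Sigma)$, where $\Sigma=(\sigma_{ij})$ with $\sigma_{ii}=0$ and, for $i\ne j$, $\sigma_{ij}=\frac{2L_i|w_{ij}|}{C_i}+|w^0_{ij}-w_{ij}|$, and $\sigma_{\max}$ denotes the maximum singular value. Then $G$ has a unique (pure) Nash equilibrium.
   Context: There are $n$ players; player $i$ chooses effort $x_i\in X_i=[\underline{x}_i,\bar{x}_i]$, $X=\prod_iX_i$. $W=(w_{ij})$ is a real $n\times n$ matrix with $w_{ii}=1$. The gain of $i$ is $k_i=\sum_jw_{ij}x_j\in K_i=[\underline{k}_i,\bar{k}_i]$ (min and max over $X$). $f_i:K_i\to\mathbb{R}$ is twice differentiable, concave and strictly increasing; $c_i:X_i\to\mathbb{R}$ is twice differentiable, convex and strictly increasing; utility $u_i(\mathbf{x})=f_i(k_i)-c_i(x_i)$. A Nash equilibrium is $\mathbf{x}\in X$ with $u_i(x_i',\mathbf{x}_{-i})\le u_i(\mathbf{x})$ for all $i$, $x_i'\in X_i$. A differentiable $g$ on an interval is $C$-concave if $g(y)\le g(x)+g'(x)(y-x)-\frac C2(y-x)^2$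 for all $x,y$. *)

(* Defs.v *)
From HB Require Import structures.
From mathcomp Require Import all_boot all_order all_algebra.
From mathcomp Require Import all_classical all_reals all_analysis.
Set Implicit Arguments. Unset Strict Implicit. Unset Printing Implicit Defensive.
Import Order.TTheory GRing.Theory Num.Theory.
Import numFieldNormedType.Exports.
Local Open Scope classical_set_scope.
Local Open Scope ring_scope.

Section NPG.
Variable R : realType.

(* [dg] is the derivative of [g] on the set [A], derivatives being taken
   within [A] (one-sided at endpoints of an interval). *)
Definition deriv_on (A : set R) (g dg : R -> R) : Prop :=
  forall x, A x ->
    (fun y => (g y - g x) / (y - x)) @ within (A `\ x) (nbhs x) --> dg x.

Definition concave_on (A : set R) (g : R -> R) : Prop :=
  forall x y t, A x -> A y -> 0 <= t -> t <= 1 ->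
    t * g x + (1 - t) * g y <= g (t * x + (1 - t) * y).

Definition convex_on (A : set R) (g : R -> R) : Prop :=
  forall x y t, A x -> A y -> 0 <= t -> t <= 1 ->
    g (t * x + (1 - t) * y) <= t * g x + (1 - t) * g y.

Definition strictly_increasing_on (A : set R) (g : R -> R) : Prop :=
  forall x y, A x -> A y -> x < y -> g x < g y.

Definition C_concave_on (C : R) (A : set R) (g dg : R -> R) : Prop :=
  forall x y, A x -> A y ->
    g y <= g x + dg x * (y - x) - C / 2 * (y - x) ^+ 2.

Definition Lipschitz_const_on (L : R) (A : set R) (g : R -> R) : Prop :=
  forall x y, A x -> A y -> `|g x - g y| <= L * `|x - y|.

Variable n : nat.

Definition Xi (lo hi : 'I_n -> R) (i : 'I_n) : set R :=
  [set t | lo i <= t /\ t <= hi i].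

Definition inX (lo hi : 'I_n -> R) (x : 'I_n -> R) : Prop :=
  forall i, Xi lo hi i (x i).

Definition gain (W : 'M[R]_n) (i : 'I_n) (x : 'I_n -> R) : R :=
  \sum_(j < n) W i j * x j.

Definition Ki (W : 'M[R]_n) (lo hi : 'I_n -> R) (i : 'I_n) : set R :=
  [set k | exists x, inX lo hi x /\ k = gain W i x].

Definition upd (x : 'I_n -> R) (i : 'I_n) (y : R) : 'I_n -> R :=
  fun j => if j == i then y else x j.

Definition utility (W : 'M[R]_n) (f c : 'I_n -> R -> R) (i : 'I_n)
  (x : 'I_n -> R) : R := f i (gain W i x) - c i (x i).

Definition nash_eq (W : 'M[R]_n) (lo hi : 'I_n -> R) (f c : 'I_n -> R -> R)
  (x : 'I_n -> R) : Prop :=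
  inX lo hi x /\
  forall i y, Xi lo hi i y -> utility W f c i (upd x i y) <= utility W f c i x.

Definition pos_def (A : 'M[R]_n) : Prop :=
  forall v : 'cV[R]_n, v != 0 -> 0 < (v^T *m A *m v) ord0 ord0.

Definition min_eigenvalue (A : 'M[R]_n) (s : R) : Prop :=
  eigenvalue A s /\ forall a, eigenvalue A a -> s <= a.

Definition singular_value (A : 'M[R]_n) (s : R) : Prop :=
  0 <= s /\ eigenvalue (A^T *m A) (s ^+ 2).

Definition max_singular_value (A : 'M[R]_n) (s : R) : Prop :=
  singular_value A s /\ forall t, singular_value A t -> t <= s.

Definition Sigma_mx (W W0 : 'M[R]_n) (L C : 'I_n -> R) : 'M[R]_n :=
  \matrix_(i, j) (if i == j then 0
                  else 2 * L i * `|W i j| / C i + `|W0 i j - W i j|).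

End NPG.

(* Main.v *)
Require Import Defs.
From HB Require Import structures.
From mathcomp Require Import all_boot all_order all_algebra.
From mathcomp Require Import all_classical all_reals all_analysis.
From mathcomp.algebra_tactics Require Import ring lra.
Import Order.TTheory GRing.Theory Num.Theory.
Import numFieldNormedType.Exports.
Local Open Scope classical_set_scope.
Local Open Scope ring_scope.
Set Implicit Arguments. Unset Strict Implicit. Unset Printing Implicit Defensive.


Section LA.
Variable R : realType.
Variable n : nat.
Implicit Types (u v w : 'I_n -> R) (A B : 'M[R]_n).

Definition sum2 (F : 'I_n -> 'I_n -> R) := \sum_i \sum_j F i j.
Definition qf A u := sum2 (fun i j => u i * A i j * u j).
Definition bil A u w := sum2 (fun i j => u i * A i j * w j).
Definition nrm2 u := \sum_i u i ^+ 2.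
Definition mv (A : 'M[R]_n) u := fun i => \sum_j A i j * u j.
Definition sumabs A := \sum_i \sum_j `|A i j|.

Lemma eq_sum2 F G : (forall i j, F i j = G i j) -> sum2 F = sum2 G.
Proof. by move=> e; apply: eq_bigr => i _; apply: eq_bigr => j _. Qed.
Lemma sum2D F G : sum2 (fun i j => F i j + G i j) = sum2 F + sum2 G.
Proof. by rewrite /sum2 -big_split; apply: eq_bigr => i _; rewrite big_split. Qed.
Lemma sum2Z c F : sum2 (fun i j => c * F i j) = c * sum2 F.
Proof. by rewrite /sum2 mulr_sumr; apply: eq_bigr => i _; rewrite mulr_sumr. Qed.
Lemma sum2_swap F : sum2 F = sum2 (fun i j => F j i).
Proof. by rewrite /sum2 exchange_big. Qed.
Lemma ler_sum2 F G : (forall i j, F i j <= G i j) -> sum2 F <= sum2 G.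
Proof. by move=> e; apply: ler_sum => i _; apply: ler_sum => j _. Qed.
Lemma norm_sum2 F : `|sum2 F| <= sum2 (fun i j => `|F i j|).
Proof.
apply: le_trans (ler_norm_sum _ _ _) _; apply: ler_sum => i _.
exact: ler_norm_sum.
Qed.

Lemma nrm2_ge0 u : 0 <= nrm2 u.
Proof. by apply: sumr_ge0 => i _; exact: sqr_ge0. Qed.
Lemma sq_le_nrm2 u i : u i ^+ 2 <= nrm2 u.
Proof.
rewrite /nrm2 (bigD1 i) //= lerDl; apply: sumr_ge0 => j _; exact: sqr_ge0.
Qed.
Lemma absmul_le u i j : `|u i| * `|u j| <= nrm2 u.
Proof.
have hi := sq_le_nrm2 u i; have hj := sq_le_nrm2 u j.
rewrite -(real_normK (num_real (u i))) in hi.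
rewrite -(real_normK (num_real (u j))) in hj.
have := sqr_ge0 (`|u i| - `|u j|); nra.
Qed.

Lemma sumabs_ge0 A : 0 <= sumabs A.
Proof. by apply: sumr_ge0 => i _; apply: sumr_ge0 => j _. Qed.

Lemma qf_abs A u : `|qf A u| <= sumabs A * nrm2 u.
Proof.
apply: le_trans (norm_sum2 _) _.
rewrite /sumabs mulr_suml; apply: ler_sum => i _; rewrite mulr_suml.
apply: ler_sum => j _.
rewrite !normrM [`|u i| * _]mulrC -mulrA; apply: ler_wpM2l => //.
exact: absmul_le.
Qed.

Lemma qf_le A u : qf A u <= sumabs A * nrm2 u.
Proof. exact: le_trans (ler_norm _) (qf_abs _ _). Qed.
Lemma qf_ge A u : - (sumabs A * nrm2 u) <= qf A u.
Proof. by rewrite lerNl; apply: le_trans (qf_abs A u); rewrite -normrN ler_norm. Qed.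

Lemma sq_lin_le (a : 'I_n -> R) u :
  (\sum_i a i * u i) ^+ 2 <= (\sum_i `|a i|) ^+ 2 * nrm2 u.
Proof.
have -> : (\sum_i a i * u i) ^+ 2 = sum2 (fun i j => a i * u i * (a j * u j)).
  by rewrite expr2 /sum2 mulr_suml; apply: eq_bigr => i _; rewrite mulr_sumr.
have -> : (\sum_i `|a i|) ^+ 2 * nrm2 u = sum2 (fun i j => `|a i| * `|a j| * nrm2 u).
  rewrite expr2 /sum2 !mulr_suml; apply: eq_bigr => i _.
  by rewrite -mulrA mulr_suml mulr_sumr; apply: eq_bigr => j _; rewrite mulrA.
apply: ler_sum2 => i j.
apply: le_trans (ler_norm _) _.
rewrite !normrM mulrACA; apply: ler_wpM2l; first by rewrite mulr_ge0.
exact: absmul_le.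
Qed.

Lemma qf_add B u w t : (forall i j, B j i = B i j) ->
  qf B (fun i => u i + t * w i) = qf B u + 2 * t * bil B u w + t ^+ 2 * qf B w.
Proof.
move=> e; rewrite /qf /bil.
have -> : sum2 (fun i j => (u i + t * w i) * B i j * (u j + t * w j)) =
  sum2 (fun i j => u i * B i j * u j) + t * sum2 (fun i j => u i * B i j * w j)
  + t * sum2 (fun i j => w i * B i j * u j)
  + t ^+ 2 * sum2 (fun i j => w i * B i j * w j).
  by rewrite -!sum2Z -!sum2D; apply: eq_sum2 => i j; ring.
have -> : sum2 (fun i j => w i * B i j * u j) = sum2 (fun i j => u i * B i j * w j).
  by rewrite sum2_swap; apply: eq_sum2 => i j /=; rewrite e; ring.
ring.
Qed.

Lemma bilE B u w : bil B u w = \sum_i u i * mv B w i.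
Proof.
rewrite /bil /sum2; apply: eq_bigr => i _; rewrite /mv mulr_sumr.
by apply: eq_bigr => j _; rewrite mulrA.
Qed.

Lemma mv_mul A B u : mv A (mv B u) = mv (A *m B) u.
Proof.
rewrite /mv; apply/funext => i.
under eq_bigr do rewrite mulr_sumr.
rewrite exchange_big /=; apply: eq_bigr => k _; rewrite mxE mulr_suml.
by apply: eq_bigr => j _; rewrite mulrA.
Qed.

Lemma mv1 u : mv 1%:M u = u.
Proof.
rewrite /mv; apply/funext => i; rewrite (bigD1 i) //= big1 ?addr0.
  by rewrite mxE eqxx mul1r.
by move=> j /negbTE ji; rewrite mxE eq_sym ji mul0r.
Qed.

Lemma nrm2_mv (M : 'M[R]_n) u : nrm2 (mv M u) = qf (M^T *m M) u.
Proof.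
rewrite /nrm2 /qf /sum2 /mv.
transitivity (\sum_k \sum_i \sum_j u i * (M k i * M k j) * u j).
  apply: eq_bigr => k _; rewrite expr2 mulr_suml; apply: eq_bigr => i _.
  rewrite mulr_sumr; apply: eq_bigr => j _; ring.
rewrite exchange_big; apply: eq_bigr => i _ /=.
rewrite exchange_big; apply: eq_bigr => j _ /=.
rewrite mxE mulr_sumr mulr_suml; apply: eq_bigr => k _; rewrite mxE; ring.
Qed.

Lemma qf_mv_ge0 (M : 'M[R]_n) u : 0 <= qf (M^T *m M) u.
Proof. by rewrite -nrm2_mv nrm2_ge0. Qed.

Lemma qf_subI A m u : qf (A - m%:M) u = qf A u - m * nrm2 u.
Proof.
rewrite /qf /nrm2 /sum2 mulr_sumr -sumrB; apply: eq_bigr => i _.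
rewrite (bigD1 i) //= [X in _ = X - _](bigD1 i) //=.
have -> : \sum_(j < n | j != i) u i * (A - m%:M) i j * u j =
          \sum_(j < n | j != i) u i * A i j * u j.
  by apply: eq_bigr => j /negbTE ji; rewrite !mxE eq_sym ji mulr0n subr0.
rewrite !mxE eqxx mulr1n; ring.
Qed.

Lemma nrm2_0 u : nrm2 u = 0 -> forall i, u i = 0.
Proof.
move=> h i; have := sq_le_nrm2 u i; rewrite h => hi.
by apply/eqP; rewrite -sqrf_eq0; apply/eqP/le_anti; rewrite hi sqr_ge0.
Qed.

Lemma rayleigh A : (0 < n)%N -> (forall i j, A j i = A i j) ->
  exists m, eigenvalue A m /\ forall u, m * nrm2 u <= qf A u.
Proof.
move=> n0 e.
pose E := [set r | exists2 u, 0 < nrm2 u & r = qf A u / nrm2 u].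
have E0 : nonempty E.
  exists (qf A (fun _ => 1) / nrm2 (fun _ => 1)); exists (fun _ => 1) => //.
  by apply: lt_le_trans (sq_le_nrm2 _ (Ordinal n0)); rewrite expr1n.
have Elb : lbound E (- sumabs A).
  move=> r [u u0 ->]; rewrite ler_pdivlMr // mulNr; exact: qf_ge.
have hE : has_lbound E by exists (- sumabs A).
have bnd : forall u, inf E * nrm2 u <= qf A u.
  move=> u; have [u0|] := eqVneq (nrm2 u) 0.
    rewrite u0 mulr0; have := qf_abs A u; rewrite u0 mulr0 normr_le0 => /eqP ->.
    by [].
  move=> u0; have u0' : 0 < nrm2 u by rewrite lt_def u0 nrm2_ge0.
  by rewrite -ler_pdivlMr //; apply: ge_inf => //; exists u.
exists (inf E); split => //.
set m := inf E.
case: (boolP (eigenvalue A m)) => // nev; exfalso.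
pose B := A - m%:M.
have eB : forall i j, B j i = B i j by move=> i j; rewrite !mxE e eq_sym.
have Bu : B \in unitmx.
  rewrite unitmxE unitfE; apply/negP => /det0P [v v0 vB].
  move/negP: nev; apply; apply/eigenvalueP; exists v => //.
  by apply/eqP; rewrite -subr_eq0 -mul_mx_scalar -mulmxBr vB.
pose Bi := invmx B.
have BBi : B *m Bi = 1%:M by rewrite mulmxV.
have qB u : qf B u = qf A u - m * nrm2 u by rewrite qf_subI.
have psd u : 0 <= qf B u by rewrite qB subr_ge0.
pose K := sumabs B * sumabs (Bi^T *m Bi) + 1.
have K0 : 0 < K by rewrite ltr_pwDr // mulr_ge0 // sumabs_ge0.
have key u : nrm2 u / K <= qf B u.
  pose w := mv Bi u.
  have bw : bil B u w = nrm2 u.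
    by rewrite bilE /w mv_mul BBi mv1 /nrm2; apply: eq_bigr => i _; rewrite expr2.
  have qw : qf B w <= (K - 1) * nrm2 u.
    apply: le_trans (qf_le _ _) _.
    rewrite /K addrK -mulrA; apply: ler_wpM2l; first exact: sumabs_ge0.
    by rewrite /w nrm2_mv qf_le.
  have := psd (fun i => u i + (- K^-1) * w i).
  rewrite qf_add // bw => h.
  have hN := nrm2_ge0 u.
  have hqw0 := psd w.
  rewrite ler_pdivrMr //.
  have h2 : 0 <= (qf B u + 2 * - K^-1 * nrm2 u + (- K^-1) ^+ 2 * qf B w) * K ^+ 2.
    by apply: mulr_ge0 => //; exact: sqr_ge0.
  have K0' : K != 0 by rewrite gt_eqF.
  have e2 : (qf B u + 2 * - K^-1 * nrm2 u + (- K^-1) ^+ 2 * qf B w) * K ^+ 2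
     = qf B u * K ^+ 2 - 2 * nrm2 u * K + qf B w by field.
  rewrite e2 in h2.
  set q := qf B u in h2 *; set N := nrm2 u in h2 qw hN *; set qw' := qf B w in h2 qw hqw0 *.
  nra.
have lb : lbound E (m + K^-1).
  move=> r [u u0 ->]; rewrite ler_pdivlMr // mulrDl.
  have := key u; rewrite qB; lra.
have := lb_le_inf E0 lb; rewrite -/m.
have : 0 < K^-1 by rewrite invr_gt0.
lra.
Qed.

End LA.


Section P2.
Variable R : realType.
Variable n : nat.

Lemma qf_opp (A : 'M[R]_n) u : qf (- A) u = - qf A u.
Proof.
rewrite /qf -[RHS]mulN1r -sum2Z; apply: eq_sum2 => i j; rewrite mxE; ring.
Qed.

Lemma sym_of_tr (A : 'M[R]_n) : A^T = A -> forall i j, A j i = A i j.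
Proof. by move=> h i j; rewrite -{2}h mxE. Qed.

Lemma W_coercive (W W0 : 'M[R]_n) (L C : 'I_n -> R) (sigma0 smax : R) :
  (0 < n)%N ->
  (forall i, W i i = 1) -> W0^T = W0 -> min_eigenvalue W0 sigma0 ->
  (forall i, W0 i i = 1) -> (forall i, 0 <= L i) -> (forall i, 0 < C i) ->
  max_singular_value (Sigma_mx W W0 L C) smax -> smax < sigma0 ->
  exists2 g, 0 < g & forall v, g * nrm2 v <= qf W v.
Proof.
move=> n0 W1 W0T [_ mineig] W01 L0 C0 [[smax0 _] maxsv] lts.
have [m0 [ev0 b0]] := rayleigh n0 (sym_of_tr W0T).
have sm0 := mineig _ ev0.
set Sg := Sigma_mx W W0 L C.
set S := Sg^T *m Sg.
have symS : forall i j, (- S) j i = (- S) i j.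
  move=> i j; rewrite [(- S) j i]mxE [(- S) i j]mxE; congr (- _).
  by apply: sym_of_tr; rewrite /S trmx_mul trmxK.
have [m1 [ev1 b1]] := rayleigh n0 symS.
have m1le : m1 <= 0.
  have h1 := b1 (fun _ => 1).
  have hN : 1 <= nrm2 (fun _ : 'I_n => (1 : R)).
    by apply: le_trans (sq_le_nrm2 _ (Ordinal n0)); rewrite expr1n.
  rewrite qf_opp in h1; have := qf_mv_ge0 Sg (fun _ => 1); rewrite -/S.
  nra.
have evS : eigenvalue S (- m1).
  move/eigenvalueP: ev1 => [v vS v0]; apply/eigenvalueP; exists v => //.
  by rewrite scaleNr -vS mulmxN opprK.
pose t := Num.sqrt (- m1).
have t0 : 0 <= t by rewrite sqrtr_ge0.
have t2 : t ^+ 2 = - m1 by rewrite sqr_sqrtr // oppr_ge0.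
have tle : t <= smax by apply: maxsv; split => //; rewrite t2.
have m1s : - m1 <= smax ^+ 2 by rewrite -t2; nra.
have Sb : forall u, nrm2 (mv Sg u) <= smax ^+ 2 * nrm2 u.
  move=> u; rewrite nrm2_mv -/S; have := b1 u; rewrite qf_opp => h.
  have := nrm2_ge0 u; nra.
pose s := (sigma0 + smax) / 2.
have s0 : 0 < s by rewrite /s; lra.
have ss : smax <= s by rewrite /s; lra.
have Sq : forall u, qf Sg u <= s * nrm2 u.
  move=> u; rewrite /qf.
  have -> : sum2 (fun i j => u i * Sg i j * u j) = \sum_i u i * mv Sg u i.
    by rewrite -bilE.
  apply: le_trans (_ : \sum_i (s / 2 * u i ^+ 2 + (2 * s)^-1 * mv Sg u i ^+ 2) <= _).
    apply: ler_sum => i _.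
    have := sqr_ge0 (s * u i - mv Sg u i).
    set y := mv Sg u i; set x := u i => h.
    have e : s / 2 * x ^+ 2 + (2 * s)^-1 * y ^+ 2 - x * y
       = (s * x - y) ^+ 2 / (2 * s) by field; rewrite gt_eqF.
    rewrite -subr_ge0 e; apply: divr_ge0 => //; lra.
  rewrite big_split /= -!mulr_sumr -/(nrm2 u) -/(nrm2 (mv Sg u)).
  have := Sb u; have := nrm2_ge0 u => hN hS.
  have : (2 * s)^-1 * nrm2 (mv Sg u) <= (2 * s)^-1 * (smax ^+ 2 * nrm2 u).
    by apply: ler_wpM2l => //; rewrite invr_ge0; lra.
  have -> : (2 * s)^-1 * (smax ^+ 2 * nrm2 u) = smax ^+ 2 / (2 * s) * nrm2 u.
    by field; rewrite gt_eqF //; lra.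
  have : smax ^+ 2 / (2 * s) <= s / 2.
    rewrite ler_pdivrMr; last lra.
    have -> : s / 2 * (2 * s) = s ^+ 2 by field.
    nra.
  nra.
exists (sigma0 - s); first by rewrite /s; lra.
move=> v.
have hd : qf W0 v - qf W v <= s * nrm2 v.
  have -> : nrm2 v = nrm2 (fun i => `|v i|).
    by apply: eq_bigr => i _; rewrite real_normK // num_real.
  apply: le_trans (Sq _).
  rewrite /qf /sum2 -sumrB; apply: ler_sum => i _; rewrite -sumrB; apply: ler_sum => j _.
  rewrite /Sg /Sigma_mx mxE.
  case: eqP => [<-|ij]; first by rewrite W1 W01; lra.
  have ha : 0 <= 2 * L i * `|W i j| / C i.
    by apply: divr_ge0; [apply: mulr_ge0; [apply: mulr_ge0 => //|] | apply: ltW].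
  have e : v i * W0 i j * v j - v i * W i j * v j = v i * (W0 i j - W i j) * v j by ring.
  rewrite e; apply: le_trans (ler_norm _) _; rewrite !normrM.
  rewrite ler_wpM2r // ler_wpM2l //; lra.
have := b0 v; have := nrm2_ge0 v; nra.
Qed.
End P2.


Section AN.
Variable R : realType.

Lemma near_within_ex (A : set R) a (P : R -> Prop) :
  (\forall y \near within A (nbhs a), P y) ->
  exists2 r : R, 0 < r & forall y, A y -> `|a - y| < r -> P y.
Proof.
rewrite /within /= => /nbhs_ballP [r r0 H]; exists r => // y Ay ay.
by apply: H => //; rewrite /ball /=.
Qed.

Lemma ex_near_within (A : set R) a (P : R -> Prop) :
  (exists2 r : R, 0 < r & forall y, A y -> `|a - y| < r -> P y) ->
  \forall y \near within A (nbhs a), P y.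
Proof.
move=> [r r0 H]; rewrite /within /=; apply/nbhs_ballP; exists r => // y ay Ay.
exact: H.
Qed.

Lemma deriv_quot (A : set R) g dg a : deriv_on A g dg -> A a ->
  forall eps, 0 < eps -> exists2 r : R, 0 < r & forall y, A y -> y != a ->
    `|a - y| < r -> `|dg a - (g y - g a) / (y - a)| < eps.
Proof.
move=> hd Aa eps e0; have := hd a Aa; move/cvgrPdist_lt => /(_ eps e0).
move/near_within_ex => [r r0 H]; exists r => // y Ay ya ay.
by apply: H => //; split => //; apply/eqP.
Qed.

Lemma deriv_lip (A : set R) g dg a : deriv_on A g dg -> A a ->
  exists2 r : R, 0 < r & forall y, A y -> `|a - y| < r ->
    `|g y - g a| <= (`|dg a| + 1) * `|y - a|.
Proof.
move=> hd Aa; have [r r0 H] := deriv_quot hd Aa ltr01.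
exists r => // y Ay ay; have [->|ya] := eqVneq y a.
  by rewrite !subrr normr0 mulr0.
have := H y Ay ya ay.
have ya0 : y - a != 0 by rewrite subr_eq0.
set q := (g y - g a) / (y - a) => h.
have -> : g y - g a = q * (y - a) by rewrite /q divfK.
rewrite normrM ler_wpM2r //.
have := ler_normD (q - dg a) (dg a); rewrite subrK.
have : `|q - dg a| < 1 by rewrite distrC.
lra.
Qed.

Lemma cont_crit (h : R -> R) a b :
  (forall x, a <= x <= b -> exists2 r : R, 0 < r & exists M : R,
     forall y, a <= y <= b -> `|x - y| < r -> `|h y - h x| <= M * `|y - x|) ->
  {within `[a, b], continuous h}.
Proof.
move=> H; apply/subspace_continuousP => x /= xab.
rewrite in_itv /= in xab.
apply/cvgrPdist_lt => eps e0; apply: ex_near_within.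
have [r r0 [M HM]] := H x xab.
pose M' := `|M| + 1.
have M'0 : 0 < M' by rewrite /M'; have := normr_ge0 M; lra.
exists (Num.min r (eps / M')).
  by rewrite lt_min r0 divr_gt0.
move=> y /= yab; rewrite in_itv /= in yab; rewrite lt_min => /andP [yr ye].
have hy := HM y yab yr.
change (`|h x - h y| < eps); rewrite distrC.
have hM : M * `|y - x| <= M' * `|x - y|.
  by rewrite (distrC y) ler_wpM2r //; rewrite /M'; have := ler_norm M; lra.
have : M' * `|x - y| < eps by rewrite mulrC -ltr_pdivlMr.
lra.
Qed.

End AN.


Section Game.
Variables (R : realType) (n : nat) (W : 'M[R]_n) (lo hi : 'I_n -> R).
Variables (f df c dc : 'I_n -> R -> R) (C : 'I_n -> R).
Hypothesis HW1 : forall i, W i i = 1.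
Hypothesis Hlohi : forall i, lo i <= hi i.
Hypothesis Hdf : forall i, deriv_on (Ki W lo hi i) (f i) (df i).
Hypothesis Hdc : forall i, deriv_on (Xi lo hi i) (c i) (dc i).
Hypothesis Hconv : forall i, convex_on (Xi lo hi i) (c i).
Hypothesis HC0 : forall i, 0 < C i.
Hypothesis HCc : forall i, C_concave_on (C i) (Ki W lo hi i) (f i) (df i).
Implicit Types (x : 'I_n -> R) (i j : 'I_n) (y z t : R).

Definition BRp i x := forall y, Xi lo hi i y ->
  utility W f c i (upd x i y) <= utility W f c i x.

Lemma upd_at x i y : upd x i y i = y.
Proof. by rewrite /upd eqxx. Qed.
Lemma upd_ne x i y j : j != i -> upd x i y j = x j.
Proof. by rewrite /upd => /negbTE ->. Qed.
Lemma upd_upd x i y z : upd (upd x i y) i z = upd x i z.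
Proof. by apply/funext => j; rewrite /upd; case: eqP. Qed.
Lemma upd_same x i : upd x i (x i) = x.
Proof. by apply/funext => j; rewrite /upd; case: eqP => // ->. Qed.

Lemma gain_upd x i y : gain W i (upd x i y) = gain W i x + (y - x i).
Proof.
rewrite /gain (bigD1 i) //= [in RHS](bigD1 i) //= upd_at HW1.
have -> : \sum_(j < n | j != i) W i j * upd x i y j = \sum_(j < n | j != i) W i j * x j.
  by apply: eq_bigr => j ji; rewrite upd_ne.
ring.
Qed.

Lemma upd_inX x i y : inX lo hi x -> Xi lo hi i y -> inX lo hi (upd x i y).
Proof. by move=> hx hy j; rewrite /upd; case: eqP => [->|]. Qed.

Lemma Ki_gain x i : inX lo hi x -> Ki W lo hi i (gain W i x).
Proof. by move=> hx; exists x. Qed.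

Lemma Xi_conv i y z t : Xi lo hi i y -> Xi lo hi i z -> 0 <= t -> t <= 1 ->
  Xi lo hi i (z + t * (y - z)).
Proof. move=> [y1 y2] [z1 z2] t0 t1; rewrite /Xi /=; split; nra. Qed.

Lemma gain_diff x (x' : 'I_n -> R) i : gain W i x - gain W i x' = mv W (fun j => x j - x' j) i.
Proof. by rewrite /gain /mv -sumrB; apply: eq_bigr => j _; ring. Qed.

Lemma FOC x i y : inX lo hi x -> BRp i x -> Xi lo hi i y ->
  (y - x i) * df i (gain W i x) <= c i y - c i (x i).
Proof.
move=> hx br hy; set a := gain W i x; set h := y - x i.
rewrite leNgt; apply/negP => hlt.
have [h0|hn0] := eqVneq h 0.
  by move: hlt; rewrite h0 mul0r /h; move/eqP: h0; rewrite subr_eq0 => /eqP ->; rewrite subrr ltxx.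
set D := h * df i a - (c i y - c i (x i)).
have D0 : 0 < D by rewrite /D subr_gt0.
pose eps := D / (`|h| + 1).
have hh1 : 0 < `|h| + 1 by have := normr_ge0 h; lra.
have eps0 : 0 < eps by rewrite /eps divr_gt0.
have epsE : eps * (`|h| + 1) = D by rewrite /eps divfK // gt_eqF.
have Ka : Ki W lo hi i a by exact: Ki_gain.
have [r r0 Hr] := deriv_quot (@Hdf i) Ka eps0.
pose t := Num.min 1 (r / (2 * (`|h| + 1))).
have t0 : 0 < t by rewrite /t lt_min ltr01 divr_gt0 // mulr_gt0.
have t1 : t <= 1 by rewrite /t ge_min lexx.
have tr : t <= r / (2 * (`|h| + 1)) by rewrite /t ge_min lexx orbT.
set z := x i + t * h.
have Xz : Xi lo hi i z by rewrite /z /h; apply: Xi_conv => //; exact: ltW.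
have Kz : Ki W lo hi i (a + t * h).
  by have := Ki_gain i (upd_inX hx Xz); rewrite gain_upd /z; congr Ki; rewrite -/a; ring.
have th0 : t * h != 0 by rewrite mulf_neq0 // gt_eqF.
have ne : a + t * h != a by rewrite -subr_eq0 addrC addKr.
have dist : `|a - (a + t * h)| < r.
  rewrite opprD addNKr normrN normrM gtr0_norm //.
  have : t * `|h| <= r / (2 * (`|h| + 1)) * `|h| by rewrite ler_wpM2r.
  have : r / (2 * (`|h| + 1)) * `|h| < r.
    rewrite mulrAC ltr_pdivrMr ?mulr_gt0 //; have := normr_ge0 h; nra.
  lra.
have := Hr _ Kz ne dist.
have -> : a + t * h - a = t * h by ring.
set q := (f i (a + t * h) - f i a) / (t * h) => hq.
have fq : f i (a + t * h) - f i a = q * (t * h) by rewrite /q divfK.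
have bu := br z Xz.
rewrite /utility gain_upd upd_at -/a in bu.
have ezh : z - x i = t * h by rewrite /z; ring.
rewrite ezh in bu.
have cv := Hconv hy (hx i) (ltW t0) t1.
have zE : t * y + (1 - t) * x i = z by rewrite /z /h; ring.
rewrite zE in cv.
have qh : q * h <= c i y - c i (x i).
  have : t * (q * h) <= t * (c i y - c i (x i)) by rewrite mulrCA -fq; lra.
  by rewrite ler_pM2l.
have : h * (df i a - q) <= `|h| * eps.
  apply: le_trans (ler_norm _) _; rewrite normrM ler_wpM2l //.
  by apply: ltW.
have : `|h| * eps < D by rewrite -epsE; have := normr_ge0 h; nra.
rewrite /D in D0 hlt *; lra.
Qed.

Lemma KL x (x' : 'I_n -> R) i : inX lo hi x -> inX lo hi x' -> BRp i x -> BRp i x' ->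
  (x i - x' i) * (gain W i x - gain W i x') <= 0.
Proof.
move=> hx hx' bx bx'.
have h1 := FOC hx bx (hx' i).
have h2 := FOC hx' bx' (hx i).
have Ka := Ki_gain i hx; have Kb := Ki_gain i hx'.
have c1 := HCc Ka Kb; have c2 := HCc Kb Ka.
have C0 := HC0 i.
set a := gain W i x in h1 c1 c2 Ka *; set b := gain W i x' in h2 c1 c2 Kb *.
set D := df i a - df i b.
set dl := x i - x' i.
have hD : 0 <= D * dl by rewrite /D /dl; lra.
have hd : D * (a - b) <= - C i * (a - b) ^+ 2.
  rewrite /D; have e : C i / 2 * (b - a) ^+ 2 = C i / 2 * (a - b) ^+ 2 by ring.
  rewrite e in c1; lra.
rewrite leNgt; apply/negP => hpos.
have hab : (a - b) ^+ 2 > 0.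
  rewrite lt_def sqr_ge0 andbT sqrf_eq0; apply/eqP => e; move: hpos; rewrite e mulr0 ltxx.
  by [].
have : D * (a - b) < 0 by have := mulr_gt0 C0 hab; lra.
move=> hneg.
have := mulr_ge0 hD (sqr_ge0 (a - b)).
have hneg' : 0 < - (D * (a - b)) by rewrite oppr_gt0.
have := mulr_gt0 hneg' hpos.
have -> : - (D * (a - b)) * (dl * (a - b)) = - (D * dl * (a - b) ^+ 2) by ring.
lra.
Qed.


Lemma Xi_itv i y : Xi lo hi i y <-> y \in `[lo i, hi i].
Proof. by rewrite in_itv /=; split => [[-> ->]|/andP[]]. Qed.

Lemma sq_abs (u s Q : R) : 0 <= Q -> u ^+ 2 <= Q * s ^+ 2 -> `|u| <= (Q + 1) * `|s|.
Proof.
move=> Q0 h; rewrite -(real_normK (num_real u)) -(real_normK (num_real s)) in h.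
have := normr_ge0 u; have := normr_ge0 s.
set a := `|u| in h *; set b := `|s| in h * => b0 a0.
rewrite leNgt; apply/negP => hlt.
have h1 : ((Q + 1) * b) ^+ 2 < a ^+ 2.
  by rewrite ltr_pXn2r // nnegrE ?mulr_ge0 //; lra.
have : Q * b ^+ 2 <= ((Q + 1) * b) ^+ 2.
  by rewrite exprMn ler_wpM2r ?sqr_ge0 //; nra.
lra.
Qed.

Variable g : R.
Hypothesis Hg0 : 0 < g.
Hypothesis Hcoer : forall v, g * nrm2 v <= qf W v.

Lemma stab x (x' : 'I_n -> R) i : inX lo hi x -> inX lo hi x' -> BRp i x -> BRp i x' ->
  (x i - x' i) * mv W (fun j => x j - x' j) i <= 0.
Proof. by move=> *; rewrite -gain_diff; apply: KL. Qed.

Lemma uniq_eq x (x' : 'I_n -> R) : inX lo hi x -> inX lo hi x' ->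
  (forall i, BRp i x) -> (forall i, BRp i x') -> x = x'.
Proof.
move=> hx hx' b b'.
set d := fun j => x j - x' j.
have q0 : qf W d <= 0.
  change (bil W d d <= 0); rewrite bilE.
  by apply: sumr_le0 => i _; apply: stab.
have N0 : nrm2 d = 0.
  apply/le_anti; rewrite nrm2_ge0 andbT.
  have := Hcoer d; have := nrm2_ge0 d; have := q0; have := Hg0; nra.
apply/funext => j; apply/eqP; rewrite -subr_eq0; apply/eqP; exact: nrm2_0 N0 j.
Qed.


Lemma util_upd x i z : utility W f c i (upd x i z) = f i (gain W i x + (z - x i)) - c i z.
Proof. by rewrite /utility gain_upd upd_at. Qed.

Lemma br_exists x i : inX lo hi x -> exists2 y, Xi lo hi i y &
  forall z, Xi lo hi i z -> utility W f c i (upd x i z) <= utility W f c i (upd x i y).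
Proof.
move=> hx.
have cont : {within `[lo i, hi i], continuous (fun z => utility W f c i (upd x i z))}.
  apply: cont_crit => z0 hz0.
  have Xz0 : Xi lo hi i z0 by case/andP: hz0.
  have Ka0 := Ki_gain i (upd_inX hx Xz0).
  have [r1 r10 H1] := deriv_lip (@Hdf i) Ka0.
  have [r2 r20 H2] := deriv_lip (@Hdc i) Xz0.
  exists (Num.min r1 r2); first by rewrite lt_min r10 r20.
  exists ((`|df i (gain W i (upd x i z0))| + 1) + (`|dc i z0| + 1)).
  move=> z hz; rewrite lt_min => /andP [zr1 zr2].
  have Xz : Xi lo hi i z by case/andP: hz.
  have Kz := Ki_gain i (upd_inX hx Xz).
  have e : gain W i (upd x i z0) - gain W i (upd x i z) = z0 - z.
    by rewrite !gain_upd; ring.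
  have zr1' : `|gain W i (upd x i z0) - gain W i (upd x i z)| < r1 by rewrite e.
  have h1 := H1 _ Kz zr1'.
  have h2 := H2 _ Xz zr2.
  have e2 : gain W i (upd x i z) - gain W i (upd x i z0) = z - z0 by rewrite !gain_upd; ring.
  rewrite e2 in h1.
  rewrite /utility !upd_at.
  set A := f i _ - f i _ in h1; set B := c i z - c i z0 in h2.
  have -> : f i (gain W i (upd x i z)) - c i z - (f i (gain W i (upd x i z0)) - c i z0) = A - B
    by rewrite /A /B; ring.
  apply: le_trans (ler_normB _ _) _; rewrite mulrDl; exact: lerD.
have [y hy Hy] := EVT_max (Hlohi i) cont.
exists y; first by apply/Xi_itv.
by move=> z /Xi_itv hz; apply: Hy.
Qed.

Lemma exist_m m : (m <= n)%N -> forall p, inX lo hi p ->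
  exists x, [/\ inX lo hi x, forall j : 'I_n, (m <= j)%N -> x j = p j &
             forall i : 'I_n, (i < m)%N -> BRp i x].
Proof.
elim: m => [|m IH] hm p hp.
  by exists p; split => // i; rewrite ltn0.
pose mo : 'I_n := Ordinal hm.
have IH' := IH (ltnW hm).
have : forall t, exists x, Xi lo hi mo t -> [/\ inX lo hi x,
    forall j : 'I_n, (m <= j)%N -> x j = upd p mo t j &
    forall i : 'I_n, (i < m)%N -> BRp i x].
  move=> t; case: (pselect (Xi lo hi mo t)) => Ht.
    by have [x hx] := IH' _ (upd_inX hp Ht); exists x.
  by exists p.
move=> /choice [xf Hxf].
have xf_mo t : Xi lo hi mo t -> xf t mo = t.
  by move=> Ht; have [_ h _] := Hxf t Ht; rewrite h ?upd_at.
have xf_hi t (j : 'I_n) : Xi lo hi mo t -> (m < j)%N -> xf t j = p j.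
  move=> Ht hj; have [_ h _] := Hxf t Ht; rewrite h ?(ltnW hj) // upd_ne //.
  by apply/negP => /eqP ji; move: hj; rewrite ji /= ltnn.
pose e t := gain W mo (xf t) - t.
pose A := (\sum_i `|W i mo|) ^+ 2.
pose B := (\sum_j `|W mo j|) ^+ 2.
have A0 : 0 <= A by apply: sqr_ge0.
have B0 : 0 <= B by apply: sqr_ge0.
pose K := B * A / g ^+ 2.
have K0 : 0 <= K by apply: divr_ge0; [exact: mulr_ge0 | exact: sqr_ge0].
have elip t t' : Xi lo hi mo t -> Xi lo hi mo t' -> (e t - e t') ^+ 2 <= K * (t - t') ^+ 2.
  move=> Ht Ht'.
  have [hxt _ bt] := Hxf t Ht; have [hxt' _ bt'] := Hxf t' Ht'.
  set d := fun j => xf t j - xf t' j.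
  pose v := fun j : 'I_n => if (j < m)%N then d j else 0.
  have dv j : d j = v j + (if j == mo then t - t' else 0).
    rewrite /v; case: ltnP => hj.
      have -> : (j == mo) = false.
        by apply/negP => /eqP jm; move: hj; rewrite jm /= ltnn.
      by rewrite addr0.
    case: eqP => [->|jm]; first by rewrite /d !xf_mo // add0r.
    have hj' : (m < j)%N by rewrite ltn_neqAle hj andbT; apply/eqP => mj; apply: jm; apply: val_inj.
    by rewrite /d !xf_hi // subrr addr0.
  have mvd i : mv W d i = mv W v i + W i mo * (t - t').
    rewrite /mv; under eq_bigr do rewrite dv mulrDr.
    rewrite big_split /=; congr (_ + _).
    rewrite (bigD1 mo) //= eqxx big1 ?addr0 //.
    by move=> j /negbTE ->; rewrite mulr0.
  set S := \sum_i W i mo * v i.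
  have qv : qf W v <= - (t - t') * S.
    change (bil W v v <= - (t - t') * S); rewrite bilE /S mulr_sumr.
    apply: ler_sum => i _.
    have vi : v i = if (i < m)%N then d i else 0 by [].
    rewrite vi; case: ltnP => him; last by rewrite !mul0r !mulr0.
    have := stab hxt hxt' (bt i him) (bt' i him); rewrite -/d mvd.
    rewrite /d; nra.
  have N0 := nrm2_ge0 v.
  have hS := sq_lin_le (fun i => W i mo) v; rewrite -/S -/A in hS.
  have hc := Hcoer v.
  have g2N : g ^+ 2 * nrm2 v <= A * (t - t') ^+ 2.
    have [Nz|Np] := eqVneq (nrm2 v) 0.
      by rewrite Nz mulr0 mulr_ge0 // sqr_ge0.
    have Np' : 0 < nrm2 v by rewrite lt_def Np N0.
    have gN0 : 0 <= g * nrm2 v by rewrite mulr_ge0 // ltW.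
    have hy : g * nrm2 v <= - ((t - t') * S) by rewrite -mulNr; lra.
    have h1 : (g * nrm2 v) ^+ 2 <= ((t - t') * S) ^+ 2.
      rewrite -sqrrN; set y := - _ in hy *; nra.
    rewrite exprMn in h1.
    have : ((t - t') * S) ^+ 2 <= (t - t') ^+ 2 * (A * nrm2 v).
      by rewrite exprMn ler_wpM2l ?sqr_ge0.
    move=> h2.
    rewrite -(ler_pM2r Np'); nra.
  have ee : e t - e t' = \sum_j W mo j * v j.
    rewrite /e; have -> : gain W mo (xf t) - t - (gain W mo (xf t') - t')
       = (gain W mo (xf t) - gain W mo (xf t')) - (t - t') by ring.
    by rewrite gain_diff -/d mvd HW1 mul1r addrK.
  rewrite ee.
  have hB := sq_lin_le (fun j => W mo j) v; rewrite -/B in hB.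
  apply: le_trans hB _.
  have hN : nrm2 v <= A * (t - t') ^+ 2 / g ^+ 2.
    by rewrite ler_pdivlMr ?exprn_gt0 // mulrC.
  rewrite /K; apply: le_trans (ler_wpM2l B0 hN) _.
  have -> : B * (A * (t - t') ^+ 2 / g ^+ 2) = B * A / g ^+ 2 * (t - t') ^+ 2 by ring.
  exact: lexx.
have : forall t, exists y, Xi lo hi mo t -> Xi lo hi mo y /\
    forall z, Xi lo hi mo z ->
      utility W f c mo (upd (xf t) mo z) <= utility W f c mo (upd (xf t) mo y).
  move=> t; case: (pselect (Xi lo hi mo t)) => Ht; last by exists 0.
  have [hxt _ _] := Hxf t Ht.
  by have [y hy Hy] := br_exists mo hxt; exists y.
move=> /choice [br Hbr].
have inz t : Xi lo hi mo t -> inX lo hi (upd (xf t) mo (br t)).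
  move=> Ht; have [hxt _ _] := Hxf t Ht; have [hb _] := Hbr t Ht.
  exact: upd_inX.
have BRz t : Xi lo hi mo t -> BRp mo (upd (xf t) mo (br t)).
  by move=> Ht z hz; rewrite upd_upd; have [_ H] := Hbr t Ht; apply: H.
have dlip t t' : Xi lo hi mo t -> Xi lo hi mo t' ->
    (br t - br t') ^+ 2 <= (e t - e t') ^+ 2.
  move=> Ht Ht'.
  have := KL (inz t Ht) (inz t' Ht') (BRz t Ht) (BRz t' Ht').
  rewrite !upd_at !gain_upd !xf_mo //.
  rewrite -/(e t) -/(e t').
  have -> : gain W mo (xf t) + (br t - t) = e t + br t by rewrite /e; ring.
  have -> : gain W mo (xf t') + (br t' - t') = e t' + br t' by rewrite /e; ring.
  have := sqr_ge0 (br t - br t' + (e t - e t')).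
  set a1 := br t; set a2 := br t'; set b1 := e t; set b2 := e t'.
  nra.
pose hf t := br t - t.
have hcont : {within `[lo mo, hi mo], continuous hf}.
  apply: cont_crit => z0 hz0; exists 1 => //; exists ((2 * K + 2) + 1).
  move=> z hz _; apply: sq_abs; first by lra.
  have Xz0 : Xi lo hi mo z0 by case/andP: hz0.
  have Xz : Xi lo hi mo z by case/andP: hz.
  have h1 := dlip _ _ Xz Xz0; have h2 := elip _ _ Xz Xz0.
  rewrite /hf.
  have := sqr_ge0 (br z - br z0 + (z - z0)).
  nra.
have [ts hts hts0] : exists2 ts, ts \in `[lo mo, hi mo] & hf ts = 0.
  apply: IVT (Hlohi mo) hcont _.
  have Xl : Xi lo hi mo (lo mo) by split; [exact: lexx | exact: Hlohi].
  have Xh : Xi lo hi mo (hi mo) by split; [exact: Hlohi | exact: lexx].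
  have [[bl _] _] := Hbr _ Xl; have [[_ bh] _] := Hbr _ Xh.
  rewrite ge_min le_max /hf; apply/andP; split; apply/orP; [right|left]; lra.
have Xts : Xi lo hi mo ts by apply/Xi_itv.
have [hx hxj hxb] := Hxf ts Xts.
exists (xf ts); split => //.
  move=> j hj; rewrite hxj ?(ltnW hj) // upd_ne //.
  by apply/negP => /eqP jm; move: hj; rewrite jm /= ltnn.
move=> i; rewrite ltnS leq_eqVlt => /orP [/eqP im|]; last exact: hxb.
have -> : i = mo by apply: val_inj.
have -> : xf ts = upd (xf ts) mo (br ts).
  have -> : br ts = xf ts mo by rewrite xf_mo //; move: hts0; rewrite /hf; lra.
  by rewrite upd_same.
exact: BRz.
Qed.

End Game.

Unset Implicit Arguments. Set Strict Implicit.

Theorem theorem3p8 (R : realType) (n : nat)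
  (W : 'M[R]_n) (lo hi : 'I_n -> R)
  (f df ddf c dc ddc : 'I_n -> R -> R)
  (W0 : 'M[R]_n) (L C : 'I_n -> R) (sigma0 smax : R) :
  (forall i, W i i = 1) ->
  (forall i, lo i <= hi i) ->
  (* f_i twice differentiable, concave, strictly increasing on K_i *)
  (forall i, deriv_on (Ki W lo hi i) (f i) (df i)) ->
  (forall i, deriv_on (Ki W lo hi i) (df i) (ddf i)) ->
  (forall i, concave_on (Ki W lo hi i) (f i)) ->
  (forall i, strictly_increasing_on (Ki W lo hi i) (f i)) ->
  (* c_i twice differentiable, convex, strictly increasing on X_i *)
  (forall i, deriv_on (Xi lo hi i) (c i) (dc i)) ->
  (forall i, deriv_on (Xi lo hi i) (dc i) (ddc i)) ->
  (forall i, convex_on (Xi lo hi i) (c i)) ->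
  (forall i, strictly_increasing_on (Xi lo hi i) (c i)) ->
  (* (1) *)
  W0^T = W0 -> pos_def W0 -> min_eigenvalue W0 sigma0 -> 0 < sigma0 ->
  (forall i, W0 i i = 1) ->
  (* (2), (3) *)
  (forall i, 0 <= L i) -> (forall i, 0 < C i) ->
  (forall i, Lipschitz_const_on (L i) (Xi lo hi i) (dc i)) ->
  (forall i, C_concave_on (C i) (Ki W lo hi i) (f i) (df i)) ->
  (* (4) *)
  max_singular_value (Sigma_mx W W0 L C) smax -> smax < sigma0 ->
  exists x, nash_eq W lo hi f c x /\
    forall y, nash_eq W lo hi f c y -> y = x.
Proof.
move=> HW1 Hlohi Hdf _ _ _ Hdc _ Hconv _ W0T _ mineig _ W01 L0 C0 _ HCc maxsv lts.
have [n0|npos] := posnP n.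
  have E : forall i : 'I_n, False.
    by move=> i; have := ltn_ord i; move: (nat_of_ord i); rewrite n0.
  exists (fun _ => 0); split.
    by split => [i|i]; case: (E i).
  by move=> y _; apply/funext => i; case: (E i).
have [g g0 Hg] := W_coercive npos HW1 W0T mineig W01 L0 C0 maxsv lts.
have hlo : inX lo hi lo by move=> i; split; [exact: lexx | exact: Hlohi].
have [x [hx _ hb]] := exist_m HW1 Hlohi Hdf Hdc Hconv C0 HCc g0 Hg (leqnn n) hlo.
have hb' : forall i, BRp W lo hi f c i x by move=> i; apply: hb.
exists x; split; first by split.
move=> y [hy by'].
exact: (uniq_eq HW1 Hdf Hconv C0 HCc g0 Hg hy hx by' hb').
Qed.
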